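(* Let Assumption (A) hold and let $\xi$ and $\eta_h$ be as in the context. There is $q_W=q_W(K,d,M_4)>0$ such that for all $0<h\le1$ and $x\in\mathbb R^k$, $\mathbb E\,W(x+\eta_h(x))\le e^{q_Wh}W(x)$; consequently $\|U_hg\|_W\le e^{q_Wh}\|g\|_W$ for every continuous $g$ with $\|g\|_W<\infty$.
   Context: $b=\sigma_0,\dots,\sigma_d:\mathbb R^k\to\mathbb R^k$. Assumption (A): there are $K>0$, integer $m_0\ge4$, $\theta\in(0,1)$ with, for $j=0..d$: $|\sigma_j(x)|\le K(1+|x|)$, $|\sigma_j(x)-\sigma_j(x')|\le K|x-x'|$, $\sigma_j\in C^{m_0}$, $D^{m_0}\sigma_j$ globally $\theta$-Hölder, operator norms $\|D^i\sigma_j\|\le K$, $1\le i\le m_0$. $\xi$ is an $\mathbb R^d$-valued random vector with $\mathbb E\xi=0$, $\mathbb E\xi_i\xi_j=\delta_{ij}$, $M_4:=\mathbb E|\xi|^4<\infty$, vanishing third moments. $\eta_h(x)=hb(x)+\sqrt h\sum_{j=1}^d\sigma_j(x)\xi_j$, $U_hg(x)=\mathbb E g(x+\eta_h(x))$. $W(x)=1+|x|^4$, $\|g\|_W=\sup_x|g(x)|/W(x)$. *)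

(* Defs.v *)
From HB Require Import structures.
From mathcomp Require Import all_boot all_order all_algebra.
From mathcomp Require Import all_classical all_reals all_analysis.
Set Implicit Arguments. Unset Strict Implicit. Unset Printing Implicit Defensive.
Import Order.TTheory GRing.Theory Num.Theory.
Import numFieldNormedType.Exports.
Local Open Scope classical_set_scope.
Local Open Scope ring_scope.

Section Defs.
Context {R : realType}.

Definition enorm (k : nat) (x : 'rV[R]_k) : R :=
  Num.sqrt (\sum_(i < k) x ord0 i ^+ 2).

Definition W (k : nat) (x : 'rV[R]_k) : R := 1 + enorm x ^+ 4.

(* Iterated directional derivative: dder [:: v1; ...; vi] f x = D^i f(x)[v1,...,vi]. *)
Definition dder (k : nat) (vs : seq 'rV[R]_k) (f : 'rV[R]_k -> 'rV[R]_k)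
  : 'rV[R]_k -> 'rV[R]_k :=
  foldr (fun v g => fun x => 'D_v g x) f vs.

Definition coeffA (k : nat) (K : R) (m0 : nat) (theta : R)
  (f : 'rV[R]_k -> 'rV[R]_k) : Prop :=
  [/\ (forall x, enorm (f x) <= K * (1 + enorm x)),
      (forall x x', enorm (f x - f x') <= K * enorm (x - x')),
      (
      (* f is C^m0: the derivatives of order < m0 are (Frechet) differentiable
         and all derivatives of order <= m0 are continuous *)
      (forall vs, (size vs < m0)%N -> forall x, differentiable (dder vs f) x) /\
      (forall vs, (size vs <= m0)%N -> continuous (dder vs f))),
      (* operator norms ||D^i f(x)|| <= K for 1 <= i <= m0 *)
      (forall vs, (1 <= size vs <= m0)%N -> forall x,
          enorm (dder vs f x) <= K * \prod_(v <- vs) enorm v) &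
      (* D^m0 f is globally theta-Hoelder (in operator norm) *)
      (exists C : R, forall vs, size vs = m0 -> forall x x',
          enorm (dder vs f x - dder vs f x')
            <= C * (enorm (x - x') `^ theta) * \prod_(v <- vs) enorm v)].

Definition assumptionA (k d : nat) (K : R) (m0 : nat) (theta : R)
  (sigma : 'I_d.+1 -> 'rV[R]_k -> 'rV[R]_k) : Prop :=
  [/\ 0 < K, (4 <= m0)%N, 0 < theta < 1 & forall j, coeffA K m0 theta (sigma j)].

(* eta_h(x) = h b(x) + sqrt h sum_{j=1}^d sigma_j(x) xi_j, with b = sigma_0;
   xi is indexed by 'I_d, xi j corresponding to sigma (lift ord0 j). *)
Definition etah (k d : nat) (sigma : 'I_d.+1 -> 'rV[R]_k -> 'rV[R]_k)
  (T : Type) (xi : 'I_d -> T -> R) (h : R) (x : 'rV[R]_k) (t : T) : 'rV[R]_k :=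
  h *: sigma ord0 x + Num.sqrt h *: \sum_(j < d) xi j t *: sigma (lift ord0 j) x.

Definition U (dT : measure_display) (T : measurableType dT) (P : probability T R)
  (k d : nat) (sigma : 'I_d.+1 -> 'rV[R]_k -> 'rV[R]_k) (xi : 'I_d -> T -> R)
  (h : R) (g : 'rV[R]_k -> R) (x : 'rV[R]_k) : R :=
  Rintegral P setT (fun t => g (x + etah sigma xi h x t)).

Definition Wnorm (k : nat) (g : 'rV[R]_k -> R) : \bar R :=
  ereal_sup (range (fun x => (`|g x| / W x)%:E)).

End Defs.

(* Main.v *)
Require Import Defs.
From HB Require Import structures.
From mathcomp Require Import all_boot all_order all_algebra.
From mathcomp Require Import all_classical all_reals all_analysis.
From mathcomp Require Import ring lra.
Import Order.TTheory GRing.Theory Num.Theory.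
Import numFieldNormedType.Exports.
Local Open Scope ring_scope.

Section Alg.
Context {R : realType}.

Lemma sum2_le (n : nat) (c : 'I_n -> R) :
  (\sum_(j < n) c j) ^+ 2 <= 2 ^+ n * \sum_(j < n) c j ^+ 2.
Proof.
elim: n c => [|n IH] c; first by rewrite !big_ord0 expr0n mulr0.
rewrite !big_ord_recr /=.
set A := \sum_(i < n) c (widen_ord (leqnSn n) i).
set SA := \sum_(i < n) c (widen_ord (leqnSn n) i) ^+ 2.
have hA : A ^+ 2 <= 2 ^+ n * SA by apply: IH.
have h1 : 1 <= (2 : R) ^+ n by apply: exprn_ege1; lra.
have hS : 0 <= SA by apply: sumr_ge0 => i _; exact: sqr_ge0.
set e := (2 : R) ^+ n in hA h1 *.
have -> : (2:R) ^+ n.+1 = 2 * e by rewrite exprS.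
set y := c ord_max.
have : 0 <= (A - y) ^+ 2 by apply: sqr_ge0.
have : 0 <= y ^+ 2 by apply: sqr_ge0.
nra.
Qed.

Lemma dot_le (n : nat) (u v : 'I_n -> R) :
  2 * `|\sum_(i < n) u i * v i| <= \sum_(i < n) u i ^+ 2 + \sum_(i < n) v i ^+ 2.
Proof.
have e1 : \sum_(i < n) (u i - v i) ^+ 2 =
   \sum_(i < n) u i ^+ 2 + \sum_(i < n) v i ^+ 2 - 2 * \sum_(i < n) u i * v i.
  rewrite mulr_sumr -big_split /= -sumrB; apply: eq_bigr => i _; ring.
have e2 : \sum_(i < n) (u i + v i) ^+ 2 =
   \sum_(i < n) u i ^+ 2 + \sum_(i < n) v i ^+ 2 + 2 * \sum_(i < n) u i * v i.
  rewrite mulr_sumr -!big_split /=; apply: eq_bigr => i _; ring.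
have h1 : 0 <= \sum_(i < n) (u i - v i) ^+ 2 by apply: sumr_ge0 => i _; exact: sqr_ge0.
have h2 : 0 <= \sum_(i < n) (u i + v i) ^+ 2 by apply: sumr_ge0 => i _; exact: sqr_ge0.
rewrite e1 in h1; rewrite e2 in h2.
set X := \sum_(i < n) u i * v i in h1 h2 *.
have [X0|X0] := lerP 0 X.
  rewrite ger0_norm //; lra.
rewrite ltr0_norm //; lra.
Qed.

Lemma absb {X B : R} : 2 * `|X| <= B -> - B <= 2 * X <= B.
Proof.
have [X0|X0] := lerP 0 X.
  rewrite ger0_norm // => h; apply/andP; split; lra.
rewrite ltr0_norm // => h; apply/andP; split; lra.
Qed.

Definition cK (K D : R) := 1 + 3 * K ^+ 2 + 2 * D * K ^+ 2.
Definition CK (K D : R) := 9 * cK K D ^+ 2 + 2 * cK K D.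

Lemma keyineq (s a K D Z nb nS X1 X2 Y : R) :
  0 <= s <= 1 -> 0 <= a -> 1 <= D -> 0 <= Z ->
  0 <= nb <= K ^+ 2 * (1 + a) ^+ 2 -> 0 <= nS <= D * K ^+ 2 * (1 + a) ^+ 2 * Z ->
  2 * `|X1| <= a ^+ 2 + nb -> 2 * `|X2| <= a ^+ 2 + nS -> 2 * `|Y| <= nb + nS ->
  (a ^+ 2 + 2 * s ^+ 2 * X1 + 2 * s * X2 + s ^+ 4 * nb + 2 * s ^+ 3 * Y + s ^+ 2 * nS) ^+ 2
  <= (a ^+ 2) ^+ 2 + 4 * s * a ^+ 2 * X2 + s ^+ 2 * CK K D * (1 + a) ^+ 4 * (2 + 2 * Z ^+ 2).
Proof.
move=> /andP[s0 s1] a0 D1 Z0 /andP[nb0 nb1] /andP[nS0 nS1] hX1 hX2 hY.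
set M := 2 * X1 + s ^+ 2 * nb + 2 * s * Y + nS.
have eq : (a ^+ 2 + 2 * s ^+ 2 * X1 + 2 * s * X2 + s ^+ 4 * nb + 2 * s ^+ 3 * Y + s ^+ 2 * nS) ^+ 2
   = (a ^+ 2) ^+ 2 + 4 * s * a ^+ 2 * X2 + s ^+ 2 * ((2 * X2 + s * M) ^+ 2 + 2 * a ^+ 2 * M).
  rewrite /M; ring.
rewrite eq.
suff hb : (2 * X2 + s * M) ^+ 2 + 2 * a ^+ 2 * M <= CK K D * (1 + a) ^+ 4 * (2 + 2 * Z ^+ 2).
  have := ler_wpM2l (sqr_ge0 s) hb; rewrite !mulrA => hh; lra.
have e4 : (1 + a) ^+ 4 = ((1 + a) ^+ 2) ^+ 2 by rewrite -exprM.
rewrite e4.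
set V2 := (1 + a) ^+ 2 in nb1 nS1 *.
set c := cK K D.
set T := V2 * (1 + Z).
have V20 : 0 <= V2 by apply: sqr_ge0.
have aV : a ^+ 2 <= V2 by rewrite /V2; nra.
have K20 : 0 <= K ^+ 2 by apply: sqr_ge0.
have T0 : 0 <= T by apply: mulr_ge0 => //; lra.
have VT : V2 <= T by rewrite /T; nra.
have c1 : 1 <= c by rewrite /c /cK; nra.
have s21 : s ^+ 2 <= 1 by nra.
have hsnb : 0 <= s ^+ 2 * nb <= nb.
  apply/andP; split; first by apply: mulr_ge0 => //; exact: sqr_ge0.
  by rewrite -[X in _ <= X](mul1r nb); apply: ler_wpM2r.
have hX1' := absb hX1.
have hX2' := absb hX2.
have hY' := absb hY.
have hsY' : - (nb + nS) <= 2 * s * Y <= nb + nS.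
  move/andP: hY' => [? ?]; apply/andP; split; nra.
have DK : 0 <= 2 * D * K ^+ 2 by apply: mulr_ge0 => //; lra.
have hh : 0 <= 2 * D * K ^+ 2 * V2 + V2 * Z * (1 + 3 * K ^+ 2).
  apply: addr_ge0; first exact: mulr_ge0.
  by apply: mulr_ge0; [exact: mulr_ge0 | lra].
have hc : c * T = V2 + 3 * K ^+ 2 * V2 + 2 * D * K ^+ 2 * V2 * Z
                  + (2 * D * K ^+ 2 * V2 + V2 * Z * (1 + 3 * K ^+ 2)).
  rewrite /c /T /cK; ring.
have hM : - (c * T) <= M <= c * T.
  rewrite hc /M.
  move/andP: hX1' => [? ?]; move/andP: hsY' => [? ?]; move/andP: hsnb => [? ?].
  apply/andP; split; lra.
have hX2c : - (c * T) <= 2 * X2 <= c * T.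
  have : 0 <= 3 * K ^+ 2 * V2 by nra.
  move/andP: hX2' => [? ?]; rewrite hc; move=> ?; apply/andP; split; lra.
have cT0 : 0 <= c * T by nra.
have h1 : (2 * X2 + s * M) ^+ 2 <= (2 * (c * T)) ^+ 2.
  move/andP: hX2c => [? ?]; move/andP: hM => [hM1 hM2].
  have hs1 : s * M <= c * T.
    rewrite -subr_ge0.
    have -> : c * T - s * M = (1 - s) * (c * T) + s * (c * T - M) by ring.
    by apply: addr_ge0; apply: mulr_ge0; lra.
  have hs2 : - (c * T) <= s * M.
    rewrite -subr_ge0.
    have -> : s * M - - (c * T) = (1 - s) * (c * T) + s * (M + c * T) by ring.
    by apply: addr_ge0; apply: mulr_ge0; lra.
  rewrite -subr_ge0.
  have -> : (2 * (c * T)) ^+ 2 - (2 * X2 + s * M) ^+ 2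
     = (2 * (c * T) - (2 * X2 + s * M)) * (2 * (c * T) + (2 * X2 + s * M)) by ring.
  apply: mulr_ge0; lra.
have h2 : 2 * a ^+ 2 * M <= 2 * c * T ^+ 2.
  move/andP: hM => [? ?].
  have : a ^+ 2 * M <= T * (c * T).
    have a20 : 0 <= a ^+ 2 by apply: sqr_ge0.
    apply: (@le_trans _ _ (a ^+ 2 * (c * T))); first by apply: ler_wpM2l.
    by apply: ler_wpM2r => //; lra.
  move=> ?; nra.
have h3 : T ^+ 2 <= V2 ^+ 2 * (2 + 2 * Z ^+ 2).
  rewrite /T exprMn; apply: ler_wpM2l; first exact: sqr_ge0.
  have : 0 <= (1 - Z) ^+ 2 by apply: sqr_ge0.
  nra.
rewrite /CK -/c.
have hT2 : 0 <= T ^+ 2 by apply: sqr_ge0.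
have hC : 0 <= 9 * c ^+ 2 + 2 * c by nra.
apply: (@le_trans _ _ ((9 * c ^+ 2 + 2 * c) * T ^+ 2)); last first.
  by rewrite -mulrA; apply: ler_wpM2l.
have : (2 * (c * T)) ^+ 2 <= 9 * c ^+ 2 * T ^+ 2.
  rewrite exprMn exprMn mulrA; apply: ler_wpM2r => //.
  have : 0 <= c ^+ 2 by apply: sqr_ge0.
  lra.
move=> ?; lra.
Qed.
End Alg.



Set Implicit Arguments. Unset Strict Implicit.
Section Vec.
Context {R : realType}.

Definition nsq (k : nat) (u : 'rV[R]_k) := \sum_(i < k) u ord0 i ^+ 2.

Lemma nsq_ge0 k (u : 'rV[R]_k) : 0 <= nsq u.
Proof. by apply: sumr_ge0 => i _; exact: sqr_ge0. Qed.

Lemma enorm2 k (u : 'rV[R]_k) : enorm u ^+ 2 = nsq u.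
Proof. by rewrite /enorm sqr_sqrtr // nsq_ge0. Qed.

Lemma enorm_ge0 k (u : 'rV[R]_k) : 0 <= enorm u.
Proof. exact: sqrtr_ge0. Qed.

Lemma W_nsq k (u : 'rV[R]_k) : W u = 1 + nsq u ^+ 2.
Proof. by rewrite /W -enorm2 -exprM. Qed.

Lemma pointwise k d (sigma : 'I_d.+1 -> 'rV[R]_k -> 'rV[R]_k) (K : R)
  (e : 'I_d -> R) (h : R) (x : 'rV[R]_k) :
  (forall j y, enorm (sigma j y) <= K * (1 + enorm y)) -> 0 < h <= 1 ->
  W (x + (h *: sigma ord0 x + Num.sqrt h *: \sum_(j < d) e j *: sigma (lift ord0 j) x))
  <= W x + (4 * Num.sqrt h * enorm x ^+ 2) *
           \sum_(j < d) e j * (\sum_(i < k) x ord0 i * sigma (lift ord0 j) x ord0 i)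
     + h * CK K (2 ^+ d) * (1 + enorm x) ^+ 4 * (2 + 2 * (\sum_(j < d) e j ^+ 2) ^+ 2).
Proof.
move=> hsig /andP[h0 h1].
set s := Num.sqrt h.
have hs : h = s ^+ 2 by rewrite /s sqr_sqrtr //; lra.
have s0 : 0 <= s by exact: sqrtr_ge0.
have s1 : s <= 1 by rewrite /s -sqrtr1 ler_sqrt; lra.
set a := enorm x.
have a0 : 0 <= a by exact: enorm_ge0.
set b := sigma ord0 x.
set w := fun j => sigma (lift ord0 j) x.
set Si := fun i => \sum_(j < d) e j * w j ord0 i.
set y := x + _.
have yE : forall i, y ord0 i = x ord0 i + s ^+ 2 * b ord0 i + s * Si i.
  move=> i; rewrite /y !mxE summxE hs /Si addrA; congr (_ + _ * _).
  by apply: eq_bigr => j _; rewrite mxE.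
set nb := nsq b.
set nS := \sum_(i < k) Si i ^+ 2.
set X1 := \sum_(i < k) x ord0 i * b ord0 i.
set X2 := \sum_(i < k) x ord0 i * Si i.
set Y := \sum_(i < k) b ord0 i * Si i.
set Z := \sum_(j < d) e j ^+ 2.
have nyE : nsq y = a ^+ 2 + 2 * s ^+ 2 * X1 + 2 * s * X2 + s ^+ 4 * nb
                   + 2 * s ^+ 3 * Y + s ^+ 2 * nS.
  rewrite /a enorm2 /nsq /nb /nS /X1 /X2 /Y /nsq !mulr_sumr -!big_split /=.
  by apply: eq_bigr => i _; rewrite yE; ring.
have X2E : X2 = \sum_(j < d) e j * (\sum_(i < k) x ord0 i * w j ord0 i).
  rewrite /X2 /Si; under eq_bigr do rewrite mulr_sumr.
  rewrite exchange_big /=; apply: eq_bigr => j _; rewrite mulr_sumr.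
  by apply: eq_bigr => i _; ring.
have Z0 : 0 <= Z by apply: sumr_ge0 => j _; exact: sqr_ge0.
have hnb : 0 <= nb <= K ^+ 2 * (1 + a) ^+ 2.
  apply/andP; split; first exact: nsq_ge0.
  rewrite /nb -enorm2 -exprMn.
  have := hsig ord0 x; rewrite -/b -/a => hb.
  have := enorm_ge0 b; move=> ?; nra.
have hw : forall j, nsq (w j) <= K ^+ 2 * (1 + a) ^+ 2.
  move=> j; rewrite -enorm2 -exprMn.
  have := hsig (lift ord0 j) x; rewrite -/a => hb.
  have := enorm_ge0 (w j); move=> ?; rewrite /w; nra.
have hnS : 0 <= nS <= 2 ^+ d * K ^+ 2 * (1 + a) ^+ 2 * Z.
  apply/andP; split; first by apply: sumr_ge0 => i _; exact: sqr_ge0.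
  apply: (@le_trans _ _ (\sum_(i < k) 2 ^+ d * \sum_(j < d) (e j * w j ord0 i) ^+ 2)).
    by apply: ler_sum => i _; exact: sum2_le.
  rewrite -mulr_sumr exchange_big /=.
  have -> : 2 ^+ d * K ^+ 2 * (1 + a) ^+ 2 * Z = 2 ^+ d * (K ^+ 2 * (1 + a) ^+ 2 * Z) by ring.
  apply: ler_wpM2l; first by apply: exprn_ge0; lra.
  rewrite /Z mulr_sumr; apply: ler_sum => j _.
  under eq_bigr do rewrite exprMn.
  rewrite -mulr_sumr -/(nsq (w j)).
  have := hw j; have := sqr_ge0 (e j); move=> ? ?.
  by rewrite mulrC; apply: ler_wpM2r.
have hX1 : 2 * `|X1| <= a ^+ 2 + nb.
  by rewrite /a enorm2; exact: dot_le.
have hX2 : 2 * `|X2| <= a ^+ 2 + nS.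
  by rewrite /a enorm2; exact: dot_le.
have hY : 2 * `|Y| <= nb + nS by exact: dot_le.
have D1 : 1 <= (2 : R) ^+ d by apply: exprn_ege1; lra.
have := @keyineq R s a K (2 ^+ d) Z nb nS X1 X2 Y (introT andP (conj s0 s1)) a0 D1 Z0 hnb hnS hX1 hX2 hY.
rewrite -nyE => key.
rewrite !W_nsq -[nsq x]enorm2 -/a -X2E hs; lra.
Qed.
End Vec.


Section Prob.
Context {dT : measure_display} {T : measurableType dT} {R : realType} (P : probability T R).
Local Open Scope ereal_scope.

Lemma le_int_nm (f1 f2 : T -> \bar R) :
  (forall t, 0 <= f1 t) -> (forall t, f1 t <= f2 t) ->
  \int[P]_t f1 t <= \int[P]_t f2 t.
Proof.
move=> f10 f12.
have f20 : forall t, 0 <= f2 t by move=> t; exact: le_trans (f10 t) (f12 t).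
rewrite !ge0_integralTE //; apply: le_ereal_sup => _ [g /= gf <-].
by exists g => //= t; exact: le_trans (gf t) (f12 t).
Qed.

Lemma abs_fine_int (f : T -> R) (Mb : R) (G : T -> \bar R) :
  (forall t, 0 <= G t) -> (forall t, (`|f t|)%:E <= G t) ->
  \int[P]_t G t <= Mb%:E -> (`|fine (\int[P]_t (f t)%:E)| <= Mb)%R.
Proof.
move=> G0 fG GM.
rewrite integralE.
have hp : forall t, (fun t => (f t)%:E)^\+ t <= G t.
  move=> t; rewrite funeposE ge_max (G0 t) andbT; apply: le_trans (fG t).
  by rewrite lee_fin; exact: ler_norm.
have hn : forall t, (fun t => (f t)%:E)^\- t <= G t.
  move=> t; rewrite funenegE ge_max (G0 t) andbT; apply: le_trans (fG t).
  by rewrite -EFinN lee_fin -normrN; exact: ler_norm.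
set A := \int[P]_(x in _) _^\+ x.
set B := \int[P]_(x in _) _^\- x.
have A0 : 0 <= A by apply: integral_ge0 => t _; exact: funepos_ge0.
have B0 : 0 <= B by apply: integral_ge0 => t _; exact: funeneg_ge0.
have AM : A <= Mb%:E.
  apply: le_trans GM; apply: le_int_nm => // t; exact: funepos_ge0.
have BM : B <= Mb%:E.
  apply: le_trans GM; apply: le_int_nm => // t; exact: funeneg_ge0.
have Af : A \is a fin_num by rewrite ge0_fin_numE // (le_lt_trans AM) // ltey.
have Bf : B \is a fin_num by rewrite ge0_fin_numE // (le_lt_trans BM) // ltey.
rewrite -(fineK Af) -(fineK Bf) in A0 B0 AM BM *.
rewrite -EFinB /=.
rewrite !lee_fin in A0 B0 AM BM.
have [hh|hh] := lerP 0 (fine A - fine B)%R.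
  by rewrite ger0_norm //; lra.
by rewrite ltr0_norm //; lra.
Qed.

Variables (d : nat) (xi : 'I_d -> {RV P >-> R}) (M4 : R).
Hypothesis hxi0 : forall i, 'E_P[xi i] = 0.
Hypothesis hM4 : 'E_P[(fun t => (\sum_(j < d) xi j t ^+ 2) ^+ 2)%R] = M4%:E.

Let Q t := ((\sum_(j < d) xi j t ^+ 2) ^+ 2)%R.

Let mxi j : measurable_fun setT (xi j : T -> R).
Proof. exact: measurable_funP. Qed.

Let mQ : measurable_fun setT Q.
Proof.
apply: measurable_realfun.measurable_funX; apply: measurable_sum => j.
exact: measurable_realfun.measurable_funX.
Qed.

Let Q0 t : (0 <= Q t)%R.
Proof. exact: sqr_ge0. Qed.

Let intQ : P.-integrable setT (fun t => (Q t)%:E).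
Proof.
apply/integrableP; split; first exact/measurable_realfun.measurable_EFinP.
under eq_integral do rewrite gee0_abs ?lee_fin //.
move: hM4; rewrite unlock => ->; exact: ltey.
Qed.

Let intxi j : P.-integrable setT (fun t => (xi j t)%:E).
Proof.
apply: (@le_integrable _ _ _ _ _ measurableT _ (fun t => (1 + Q t)%:E)).
- exact/measurable_realfun.measurable_EFinP.
- move=> t _.
  have h1Q : (0 <= 1 + Q t)%R by apply: addr_ge0 => //; exact: Q0.
  rewrite lee_fin [X in (_ <= X)%R]ger0_norm //.
  have hZ : (xi j t ^+ 2 <= \sum_(l < d) xi l t ^+ 2)%R.
    rewrite (bigD1 j) //= lerDl; apply: sumr_ge0 => l _; exact: sqr_ge0.
  have hQ : (xi j t ^+ 2 ^+ 2 <= Q t)%R.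
    rewrite /Q; have := sqr_ge0 (xi j t); move: hZ.
    set z := (\sum_(l < d) _)%R; move=> hZ h0; nra.
  set a := xi j t in hQ *.
  have [a0|a0] := lerP 0 a.
    rewrite ger0_norm //.
    have : (0 <= (a - 1) ^+ 2)%R by apply: sqr_ge0.
    have : (0 <= (a ^+ 2 - 1) ^+ 2)%R by apply: sqr_ge0.
    nra.
  rewrite ltr0_norm //.
  have : (0 <= (a + 1) ^+ 2)%R by apply: sqr_ge0.
  have : (0 <= (a ^+ 2 - 1) ^+ 2)%R by apply: sqr_ge0.
  nra.
- apply: (eq_integrable measurableT (cst 1%:E \+ (fun t => (Q t)%:E))).
    by move=> t _ /=; rewrite EFinD.
  apply: integrableD => //; exact: finite_measure_integrable_cst.
Qed.

Lemma intB (kap beta : R) (al : 'I_d -> R) :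
  P.-integrable setT (fun t => (kap + \sum_(j < d) al j * xi j t + beta * Q t)%:E) /\
  \int[P]_t (kap + \sum_(j < d) al j * xi j t + beta * Q t)%:E = (kap + beta * M4)%:E.
Proof.
have iL : P.-integrable setT (fun t => (\sum_(j < d) al j * xi j t)%:E).
  apply: (eq_integrable measurableT (fun t => \sum_(j < d) ((al j)%:E * (xi j t)%:E))).
    by move=> t _ /=; under eq_bigr do rewrite -EFinM; rewrite sumEFin.
  apply: integrable_sum => // j _; exact: integrableZl.
have iQ : P.-integrable setT (fun t => (beta * Q t)%:E).
  apply: (eq_integrable measurableT (fun t => beta%:E * (Q t)%:E)).
    by move=> t _; rewrite EFinM.
  exact: integrableZl.
have iK : P.-integrable setT (fun t => kap%:E).
  exact: finite_measure_integrable_cst.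
have iKL : P.-integrable setT (fun t => kap%:E + (\sum_(j < d) al j * xi j t)%:E).
  exact: integrableD.
split.
  apply: (eq_integrable measurableT (fun t => (kap%:E + (\sum_(j < d) al j * xi j t)%:E) + (beta * Q t)%:E)).
    by move=> t _; rewrite !EFinD.
  exact: integrableD.
under eq_integral do rewrite !EFinD.
rewrite integralD //= integralD //=.
have -> : \int[P]_t (kap%:E) = kap%:E.
  by have := expectation_cst P kap; rewrite unlock.
have -> : \int[P]_t (\sum_(j < d) al j * xi j t)%:E = 0.
  rewrite (eq_integral (fun t => \sum_(j < d) ((al j)%:E * (xi j t)%:E))); last first.
    by move=> t _; rewrite -sumEFin; apply: eq_bigr => j _; rewrite EFinM.
  rewrite integral_sum //; last by move=> j; exact: integrableZl.
  apply: big1 => j _; rewrite integralZl //.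
  by move: (hxi0 j); rewrite unlock => ->; rewrite mule0.
rewrite (eq_integral (fun t => beta%:E * (Q t)%:E)); last first.
  by move=> t _; rewrite EFinM.
rewrite integralZl //.
have -> : \int[P]_t (Q t)%:E = M4%:E by rewrite -hM4 unlock.
by rewrite adde0 -EFinM -EFinD.
Qed.
End Prob.
Section Main.
Local Open Scope classical_set_scope.
Local Open Scope ring_scope.

Theorem lemma15 (R : realType) (K : R) (d : nat) (M4 : R) :
  exists qW : R, 0 < qW /\
  forall (k m0 : nat) (theta : R) (sigma : 'I_d.+1 -> 'rV[R]_k -> 'rV[R]_k)
         (dT : measure_display) (T : measurableType dT) (P : probability T R)
         (xi : 'I_d -> {RV P >-> R}),
    assumptionA K m0 theta sigma ->
    (forall i, ('E_P[xi i] = 0)%E) ->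
    (forall i j, ('E_P[(fun t => xi i t * xi j t)%R] = ((i == j)%:R)%:E)%E) ->
    (forall i j l, ('E_P[(fun t => xi i t * xi j t * xi l t)%R] = 0)%E) ->
    ('E_P[(fun t => (\sum_(j < d) xi j t ^+ 2) ^+ 2)%R] = M4%:E)%E ->
    (forall h x, 0 < h <= 1 ->
       ('E_P[(fun t => W (x + etah sigma (fun j => xi j) h x t))%R]
          <= (expR (qW * h) * W x)%:E)%E) /\
    (forall h (g : 'rV[R]_k -> R), 0 < h <= 1 -> continuous g ->
       (Wnorm g < +oo)%E ->
       (Wnorm (U P sigma (fun j => xi j) h g) <= (expR (qW * h))%:E * Wnorm g)%E).
Proof.
set C := CK K (2 ^+ d).
have D0 : 0 <= (2 : R) ^+ d by apply: exprn_ge0.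
have c1 : 1 <= cK K (2 ^+ d).
  rewrite /cK; have := sqr_ge0 K; move=> ?.
  have : 0 <= 2 * 2 ^+ d * K ^+ 2 by apply: mulr_ge0 => //; apply: mulr_ge0 => //; lra.
  lra.
have C0 : 0 <= C by rewrite /C /CK; set c := cK K _ in c1 *; nra.
exists (16 * C * (1 + `|M4|) + 1); split.
  have : 0 <= 16 * C * (1 + `|M4|) by apply: mulr_ge0; [lra | have := normr_ge0 M4; lra].
  lra.
set qW := 16 * C * (1 + `|M4|) + 1.
move=> k m0 theta sigma dT T P xi hA hxi0 _ _ hM4.
have hsig : forall j y, enorm (sigma j y) <= K * (1 + enorm y).
  case: hA => _ _ _ hco j y; by case: (hco j) => h1 _ _ _ _; exact: h1.
have M40 : 0 <= M4.
  have : (0 <= M4%:E)%E.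
    by rewrite -hM4; apply: expectation_ge0 => t; exact: sqr_ge0.
  by rewrite lee_fin.
have core : forall h x, 0 < h <= 1 -> exists Bf : T -> R,
   [/\ (forall t, W (x + etah sigma (fun j => xi j) h x t) <= Bf t),
       P.-integrable setT (fun t => (Bf t)%:E) &
       (\int[P]_t (Bf t)%:E <= (expR (qW * h) * W x)%:E)%E].
  move=> h x hh.
  have /andP[h0 h1] := hh.
  set s := Num.sqrt h.
  set a := enorm x.
  set cj := fun j => \sum_(i < k) x ord0 i * sigma (lift ord0 j) x ord0 i.
  set ga := h * C * (1 + a) ^+ 4.
  pose Bf := fun t => (W x + 2 * ga) + \sum_(j < d) (4 * s * a ^+ 2 * cj j) * xi j t
                      + (2 * ga) * (\sum_(j < d) xi j t ^+ 2) ^+ 2.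
  have [iB eB] := intB hxi0 hM4 (W x + 2 * ga) (2 * ga) (fun j => 4 * s * a ^+ 2 * cj j).
  exists Bf; split.
  - move=> t.
    have := pointwise (fun j => xi j t) x hsig hh.
    rewrite -/s -/a -/C /etah /Bf.
    have -> : \sum_(j < d) (4 * s * a ^+ 2 * cj j) * xi j t
        = 4 * s * a ^+ 2 * \sum_(j < d) xi j t * cj j.
      by rewrite mulr_sumr; apply: eq_bigr => j _; rewrite /cj; ring.
    rewrite /ga /cj; lra.
  - exact: iB.
  - rewrite eB lee_fin.
    have a0 : 0 <= a by exact: enorm_ge0.
    have Wx : W x = 1 + a ^+ 4 by [].
    have V4 : (1 + a) ^+ 4 <= 8 * W x.
      rewrite Wx.
      have : 0 <= (a - 1) ^+ 2 by apply: sqr_ge0.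
      have : 0 <= (a ^+ 2 - 1) ^+ 2 by apply: sqr_ge0.
      have : (1 + a) ^+ 4 = ((1 + a) ^+ 2) ^+ 2 by rewrite -exprM.
      have : a ^+ 4 = (a ^+ 2) ^+ 2 by rewrite -exprM.
      move=> -> ->; nra.
    have W0 : 0 <= W x by rewrite Wx; have := sqr_ge0 (a ^+ 2); rewrite -exprM; lra.
    have hC : 2 * ga * (1 + M4) <= h * qW * W x.
      rewrite /ga /qW ger0_norm //.
      have hC0 : 0 <= h * C by apply: mulr_ge0 => //; lra.
      have : h * C * (1 + a) ^+ 4 <= h * C * (8 * W x) by apply: ler_wpM2l.
      have : 0 <= h * C * (1 + a) ^+ 4 by apply: mulr_ge0 => //; apply: exprn_ge0; lra.
      move=> ? ?; nra.
    have := expR_ge1Dx (qW * h).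
    move=> he.
    have : (1 + qW * h) * W x <= expR (qW * h) * W x by apply: ler_wpM2r.
    move=> ?; nra.
split.
  move=> h x hh.
  have [Bf [hB iB eB]] := core h x hh.
  rewrite unlock; apply: le_trans eB.
  apply: le_int_nm => t; rewrite lee_fin //.
  rewrite /W; have := enorm_ge0 (x + etah sigma (fun j => xi j) h x t).
  move=> e0; have := exprn_ge0 4 e0; lra.
  move=> h g hh _ hG.
  set G := Wnorm g.
  have Wpos : forall y : 'rV[R]_k, 0 < W y.
    move=> y; rewrite /W; have := enorm_ge0 y; move=> e0; have := exprn_ge0 4 e0; lra.
  have G0 : (0 <= G)%E.
    have hy := imageT (fun x : 'rV[R]_k => (`|g x| / W x)%:E) 0.
    apply: le_trans (@ereal_sup_ubound R _ _ hy).
    by rewrite lee_fin; apply: divr_ge0 => //; apply: ltW.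
  have Gfin : G \is a fin_num by rewrite ge0_fin_numE.
  set g0 := fine G.
  have GE : G = g0%:E by rewrite fineK.
  have g00 : 0 <= g0 by rewrite -lee_fin -GE.
  have hbound : forall y, `|g y| <= g0 * W y.
    move=> y.
    have hy := imageT (fun x : 'rV[R]_k => (`|g x| / W x)%:E) y.
    have H : ((`|g y| / W y)%:E <= G)%E := @ereal_sup_ubound R _ _ hy.
    by move: H; rewrite GE lee_fin ler_pdivrMr.
  rewrite GE -EFinM; apply: ge_ereal_sup => _ [x _ <-].
  rewrite lee_fin ler_pdivrMr //.
  have [Bf [hB iB eB]] := core h x hh.
  rewrite /U /Rintegral.
  apply: (abs_fine_int (G := fun t => (g0 * Bf t)%:E)).
  - move=> t; rewrite lee_fin; apply: mulr_ge0 => //.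
    exact: le_trans (ltW (Wpos _)) (hB t).
  - move=> t; rewrite lee_fin; apply: le_trans (hbound _) _.
    by apply: ler_wpM2l.
  - under eq_integral do rewrite EFinM.
    rewrite integralZl //.
    have : (g0%:E * \int[P]_t (Bf t)%:E <= g0%:E * (expR (qW * h) * W x)%:E)%E.
      by apply: lee_wpmul2l; rewrite ?lee_fin.
    move=> hh2; apply: le_trans hh2 _.
    by rewrite -EFinM lee_fin; lra.
Qed.
End Main.
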